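(* Let $\alpha\in\mathbb{R}\setminus\{0\}$, let $h(z)=f_Z(z;\alpha)$ be the $BASLa_2(\alpha)$ density and let $$h_1(z)=\frac{4+8\alpha^2z^2+\alpha^4z^4}{C_2(\alpha)}\cdot\frac12 e^{-|z|},\qquad z\in\mathbb{R}$$ (the symmetric component density). Then $h_1$ is a probability density and $$\sup_{z\in\mathbb{R}}\frac{h(z)}{h_1(z)}=\frac{3+2\sqrt2}{3}.$$
   Context: For $\alpha\in\mathbb{R}$ let $C_2(\alpha)=4(1+4\alpha^2+6\alpha^4)$. A real random variable $Z$ has the Balakrishnan alpha skew Laplace distribution with parameter $\alpha$, written $Z\sim BASLa_2(\alpha)$, if it has probability density $$f_Z(z;\alpha)=\frac{\big[(1-\alpha z)^2+1\big]^2}{C_2(\alpha)}\cdot\frac12 e^{-|z|},\qquad z\in\mathbb{R}.$$ *)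

(* Defs.v *)
From Stdlib Require Import Reals Lra.
Open Scope R_scope.

Definition C2 (alpha : R) : R := 4 * (1 + 4 * alpha ^ 2 + 6 * alpha ^ 4).

Definition f_BASLa2 (alpha z : R) : R :=
  ((1 - alpha * z) ^ 2 + 1) ^ 2 / C2 alpha * (/ 2 * exp (- Rabs z)).

Definition h1 (alpha z : R) : R :=
  (4 + 8 * alpha ^ 2 * z ^ 2 + alpha ^ 4 * z ^ 4) / C2 alpha
    * (/ 2 * exp (- Rabs z)).

Definition is_prob_density (f : R -> R) : Prop :=
  (forall z, 0 <= f z) /\
  (forall a b, inhabited (Riemann_integrable f a b)) /\
  (forall eps, 0 < eps -> exists M0, forall M (pr : Riemann_integrable f (- M) M),
     M0 <= M -> Rabs (RiemannInt pr - 1) < eps).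

(* Main.v *)
Require Import Defs.
From Stdlib Require Import Reals Lra Psatz.
From Coquelicot Require Import Coquelicot.
Open Scope R_scope.

Lemma C2_pos a : 0 < C2 a.
Proof. unfold C2. nra. Qed.

Lemma ratio_eq a z : f_BASLa2 a z / h1 a z =
  ((1 - a*z)^2+1)^2 / (4 + 8 * a ^ 2 * z ^ 2 + a ^ 4 * z ^ 4).
Proof.
  unfold f_BASLa2, h1. pose proof (C2_pos a). pose proof (exp_pos (- Rabs z)).
  assert (0 < 4 + 8 * a ^ 2 * z ^ 2 + a ^ 4 * z ^ 4) by nra.
  field. lra.
Qed.

Lemma key_ineq t r : r * r = 2 -> 0 < r ->
  r * t^4 + 6*t^3 + 8*r*t^2 + 12*t + 4*r >= 0.
Proof.
  intros Hr Hp.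
  set (A := t^4+8*t^2+4). set (B := 6*t^3+12*t).
  assert (HA: 0 < A) by (unfold A; nra).
  assert (E: 2*A^2 - B^2 = (t^2-2)^2*(2*t^4+4*t^2+8)) by (unfold A, B; ring).
  assert (HE: 0 <= 2*A^2 - B^2) by (rewrite E; apply Rmult_le_pos; [apply pow2_ge_0 | nra]).
  replace (r * t^4 + 6*t^3 + 8*r*t^2 + 12*t + 4*r) with (A*r + B) by (unfold A, B; ring).
  destruct (Rle_dec 0 B). nra.
  assert ((A*r)^2 = 2*A^2) by (replace ((A*r)^2) with (A^2*(r*r)) by ring; rewrite Hr; ring).
  assert (0 < A*r) by nra.
  apply Rnot_lt_ge; intro Hc.
  assert (0 < (-(A*r+B))*(A*r-B)) by (apply Rmult_lt_0_compat; lra).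
  nra.
Qed.

Lemma sup_part a : a <> 0 ->
  is_lub (fun y => exists z : R, y = f_BASLa2 a z / h1 a z) ((3 + 2 * sqrt 2) / 3).
Proof.
  intros Ha. pose proof (sqrt_sqrt 2 ltac:(lra)) as Hr.
  pose proof (sqrt_lt_R0 2 ltac:(lra)) as Hp. set (r := sqrt 2) in *.
  split.
  - intros y [z ->]. rewrite ratio_eq. set (t := a*z).
    replace (8*a^2*z^2) with (8*t^2) by (unfold t; ring).
    replace (a^4*z^4) with (t^4) by (unfold t; ring).
    pose proof (key_ineq t r Hr Hp).
    assert (0 < 4 + 8 * t ^ 2 + t ^ 4) by nra.
    apply Rmult_le_reg_r with (4 + 8 * t ^ 2 + t ^ 4); auto.
    replace (((1 - t)^2+1)^2 / (4 + 8 * t ^ 2 + t ^ 4) * (4 + 8 * t ^ 2 + t ^ 4))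
      with (((1 - t)^2+1)^2) by (field; lra). nra.
  - intros b Hb. apply Hb. exists (- r / a). rewrite ratio_eq.
    replace (a * (-r/a)) with (-r) by (field; auto).
    replace (8*a^2*(-r/a)^2) with (8*(r*r)) by (field; auto).
    replace (a^4*(-r/a)^4) with ((r*r)*(r*r)) by (field; auto).
    replace ((1 - - r)^2 + 1) with (2 + 2*r + r*r) by ring.
    rewrite Hr. replace ((2+2*r+2)^2) with (16 + 16*r + 4*(r*r)) by ring. rewrite Hr. field.
Qed.

Section D.
Variable a : R.
Let c := C2 a.
Lemma c_pos : 0 < c. Proof. unfold c, C2. nra. Qed.
Definition pp z := 4 + 8 * a ^ 2 * z ^ 2 + a ^ 4 * z ^ 4.
Definition SS z := a^4*z^4 + 4*a^4*z^3 + (8*a^2+12*a^4)*z^2 + (16*a^2+24*a^4)*z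
   + (4+16*a^2+24*a^4).
Definition g1 z := pp z / C2 a * (/2 * exp (- z)).
Definition F1 z := - SS z / C2 a * (/2 * exp (- z)).
Definition g2 z := pp z / C2 a * (/2 * exp z).
Definition F2 z := SS (- z) / C2 a * (/2 * exp z).

Lemma dF1 x : is_derive F1 x (g1 x).
Proof.
  pose proof c_pos. unfold F1, g1, pp, SS. auto_derive; [trivial|]. unfold c in *. field. lra.
Qed.
Lemma dF2 x : is_derive F2 x (g2 x).
Proof.
  pose proof c_pos. unfold F2, g2, pp, SS. auto_derive; [trivial|]. unfold c in *. field. lra.
Qed.

Lemma int_pos M : 0 <= M -> is_RInt (h1 a) 0 M (F1 M - F1 0).
Proof.
  intros HM.
  apply is_RInt_ext with g1.
  { intros x. rewrite Rmin_left, Rmax_right by lra. intros Hx.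
    unfold g1, h1, pp. rewrite Rabs_right by lra. reflexivity. }
  apply (is_RInt_derive F1 g1 0 M).
  - intros; apply dF1.
  - intros x _. apply (ex_derive_continuous (V:=R_NormedModule) g1). unfold g1, pp. auto_derive. trivial.
Qed.

Lemma int_neg M : 0 <= M -> is_RInt (h1 a) (-M) 0 (F2 0 - F2 (-M)).
Proof.
  intros HM.
  apply is_RInt_ext with g2.
  { intros x. rewrite Rmin_left, Rmax_right by lra. intros Hx.
    unfold g2, h1, pp. rewrite Rabs_left by lra. rewrite Ropp_involutive. reflexivity. }
  apply (is_RInt_derive F2 g2 (-M) 0).
  - intros; apply dF2.
  - intros x _. apply (ex_derive_continuous (V:=R_NormedModule) g2). unfold g2, pp. auto_derive. trivial.
Qed.

Lemma int_total M : 0 <= M -> is_RInt (h1 a) (-M) M (1 - SS M * exp (- M) / c).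
Proof.
  intros HM. pose proof c_pos.
  pose proof (is_RInt_Chasles _ _ _ _ _ _ (int_neg M HM) (int_pos M HM)) as H1.
  replace (1 - SS M * exp (- M) / c) with (plus (F2 0 - F2 (-M)) (F1 M - F1 0)); auto.
  unfold plus; simpl. unfold F1, F2. rewrite Ropp_0, exp_0, Ropp_involutive.
  replace (SS 0) with c by (unfold SS, c, C2; ring).
  unfold c. field. unfold c in *; lra.
Qed.

Lemma cont_h1 x : continuity_pt (h1 a) x.
Proof.
  apply continuity_pt_filterlim.
  set (q := fun u => pp u / C2 a * (/2 * exp (- u))).
  apply (continuous_ext (fun z => q (Rabs z))).
  { intros z. unfold q, h1, pp. rewrite <- (pow2_abs z).
    replace (Rabs z ^ 4) with ((Rabs z ^ 2)^2) by ring.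
    replace (z ^ 4) with ((z ^ 2)^2) by ring. rewrite pow2_abs. reflexivity. }
  apply continuous_comp. apply continuous_Rabs.
  apply (ex_derive_continuous (V:=R_NormedModule) q). unfold q, pp. auto_derive. trivial.
Qed.

Lemma exp_big M : 0 <= M -> M^5 / 3125 <= exp M.
Proof.
  intros HM.
  assert (E: exp M = exp (M/5) ^ 5).
  { replace M with (M/5+M/5+M/5+M/5+M/5) at 1 by field.
    rewrite !exp_plus. ring. }
  rewrite E.
  assert (M/5 <= exp (M/5)).
  { destruct (Req_dec M 0). subst. unfold Rdiv. rewrite Rmult_0_l, exp_0. lra.
    pose proof (exp_ineq1 (M/5) ltac:(intro; apply H; lra)). lra. }
  replace (M^5/3125) with ((M/5)^5) by field.
  apply pow_incr. lra.
Qed.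

Lemma SS_bound M : 1 <= M -> 0 <= SS M <= (4 + 40*a^2 + 65*a^4) * M^4.
Proof.
  intros HM. unfold SS.
  assert (0 <= a^2) by nra. assert (0 <= a^4) by nra.
  assert (1 <= M^2) by nra. assert (M <= M^2) by nra.
  assert (M^2 <= M^3) by nra. assert (M^3 <= M^4) by nra.
  split; nra.
Qed.

Lemma density : is_prob_density (h1 a).
Proof.
  pose proof c_pos as Hc.
  split; [|split].
  - intros z. unfold h1. pose proof (exp_pos (- Rabs z)).
    apply Rmult_le_pos; [|lra]. unfold Rdiv. apply Rmult_le_pos.
    nra. left. apply Rinv_0_lt_compat. exact Hc.
  - intros x y. constructor. destruct (Rle_dec x y).
    + apply continuity_implies_RiemannInt; auto. intros; apply cont_h1.
    + apply RiemannInt_P1, continuity_implies_RiemannInt; [lra|]. intros; apply cont_h1.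
  - intros eps Heps.
    set (K := 4 + 40*a^2 + 65*a^4).
    assert (HK: 0 < K) by (unfold K; nra).
    exists (1 + 3125 * K / (eps * c)).
    intros M pr HM.
    assert (0 < 3125 * K / (eps * c)).
    { apply Rdiv_lt_0_compat; nra. }
    assert (H1M : 1 <= M) by lra.
    rewrite <- RInt_Reals.
    rewrite (is_RInt_unique _ _ _ _ (int_total M ltac:(lra))).
    replace (1 - SS M * exp (- M) / c - 1) with (- (SS M / exp M / c)).
    2:{ rewrite exp_Ropp. pose proof (exp_pos M). unfold c in *. field. split; lra. }
    rewrite Rabs_Ropp.
    destruct (SS_bound M H1M) as [S0 S1]. fold K in S1.
    pose proof (exp_big M ltac:(lra)). pose proof (exp_pos M).
    rewrite Rabs_right.
    2:{ apply Rle_ge. unfold Rdiv. apply Rmult_le_pos. apply Rmult_le_pos; auto.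
        left; apply Rinv_0_lt_compat; auto. left; apply Rinv_0_lt_compat; auto. }
    apply Rmult_lt_reg_r with (c * exp M). nra.
    replace (SS M / exp M / c * (c * exp M)) with (SS M) by (field; lra).
    assert (Hm : 3125 * K < eps * c * M).
    { assert (3125 * K / (eps * c) < M) by lra.
      apply Rmult_lt_compat_l with (r := eps * c) in H2; [|nra].
      replace (eps * c * (3125 * K / (eps * c))) with (3125*K) in H2 by (field; lra). lra. }
    assert (M^4 > 0) by (apply pow_lt; lra).
    assert (HH5: 3125 * K * M^4 < eps * c * M * M^4) by nra.
    assert (eps * c * (M^5/3125) <= eps * c * exp M).
    { apply Rmult_le_compat_l; [nra|auto]. }
    replace (eps * c * M * M^4) with (3125 * (eps*c*(M^5/3125))) in HH5 by (simpl; field).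
    nra.
Qed.
End D.

Theorem mainTheorem9 (alpha : R) (Halpha : alpha <> 0) :
  is_prob_density (h1 alpha) /\
  is_lub (fun y => exists z : R, y = f_BASLa2 alpha z / h1 alpha z)
         ((3 + 2 * sqrt 2) / 3).
Proof.
  split. apply density. apply sup_part; auto.
Qed.
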